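(* Let $X$ be a finite set, let $\emptyset \neq A \subseteq B \subseteq 2^X$, and let $X_p$ be a random subset of $X$ with distribution $\mu_p$. Let $K$ be a constant such that for every finite set $Y$ and every nontrivial upper set $\mathcal{F}\subseteq 2^Y$ one has $p_c(\mathcal{F}) \le K\, q(\mathcal{F}) \log \ell(\mathcal{F})$ (such a universal constant exists by the Park-Pham theorem). Then for $p\in(0,1)$, $$\mathbb{P}\big(X_p \in A \mid X_p \in B\big) > \tfrac{1}{2}\, r_{A,B}(p)$$ whenever $p > K\, q(\langle A \rangle)\log \ell(\langle A \rangle)$.
   Context: For $p\in[0,1]$, $\mu_p$ is the product measure on $2^X$: $\mu_p(S)=p^{|S|}(1-p)^{|X|-|S|}$ for $S\subseteq X$, extended to families by $\mu_p(\mathcal{F})=\sum_{S\in\mathcal{F}}\mu_p(S)$. A property $\mathcal{F}\subseteq 2^X$ is an upper set if $S\in\mathcal{F}$, $S\subseteq T$ imply $T\in\mathcal{F}$, and nontrivial if $\mathcal{F}\ne\emptyset,2^X$. The critical probability $p_c(\mathcal{F})$ of a nontrivial upper set is the unique $p$ with $\mu_p(\mathcal{F})=\frac12$. For $\mathcal{A}\subseteq 2^X$, $\langle \mathcal{A}\rangle=\{T\subseteq X: S\subseteq T\text{ for some }S\in\mathcal{A}\}$. A family $\mathcal{G}$ covers an upper set $\mathcal{F}$ if $\mathcal{F}\subseteq\bigcup_{S\in\mathcal{G}}\langle\{S\}\rangle$; $\mathcal{F}$ is $p$-small if some cover $\mathcal{G}$ has $\sum_{S\in\mathcal{G}}p^{|S|}\le\frac12$;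 $q(\mathcal{F})$ is the largest $p$ for which $\mathcal{F}$ is $p$-small. With $\mathcal{F}_0$ the set of inclusion-minimal elements of $\mathcal{F}$, $\ell_0(\mathcal{F})=\max\{|S|:S\in\mathcal{F}_0\}$ and $\ell(\mathcal{F})=\max\{\ell_0(\mathcal{F}),2\}$. For $\emptyset\ne A\subseteq B\subseteq 2^X$, $r_{A,B}(p)=\dfrac{\mathbb{P}(X_p\in A\mid X_p\in\langle A\rangle)}{\mathbb{P}(X_p\in B)}$. *)

(* Defs.v *)
From HB Require Import structures.
From mathcomp Require Import all_boot all_order all_algebra.
From mathcomp Require Import reals exp.
Set Implicit Arguments. Unset Strict Implicit. Unset Printing Implicit Defensive.
Import Order.TTheory GRing.Theory Num.Theory.
Local Open Scope ring_scope.

Section Defs.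
Variables (R : realType) (X : finType).

Definition mu (p : R) (S : {set X}) : R :=
  p ^+ #|S| * (1 - p) ^+ (#|X| - #|S|)%N.

Definition muF (p : R) (F : {set {set X}}) : R := \sum_(S in F) mu p S.

Definition condprob (p : R) (A B : {set {set X}}) : R :=
  muF p (A :&: B) / muF p B.

Definition upper_set (F : {set {set X}}) : Prop :=
  forall S T : {set X}, S \in F -> S \subset T -> T \in F.

Definition nontrivial (F : {set {set X}}) : Prop :=
  F != set0 /\ F != setT.

Definition upclosure (A : {set {set X}}) : {set {set X}} :=
  [set T : {set X} | [exists S in A, S \subset T]].

Definition is_critical_prob (F : {set {set X}}) (p : R) : Prop :=
  0 <= p <= 1 /\ muF p F = 2^-1.

Definition covers (G F : {set {set X}}) : Prop :=
  forall T, T \in F -> exists2 S, S \in G & S \subset T.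

Definition p_small (F : {set {set X}}) (p : R) : Prop :=
  exists G : {set {set X}}, covers G F /\ \sum_(S in G) p ^+ #|S| <= 2^-1.

Definition is_q (F : {set {set X}}) (q : R) : Prop :=
  0 <= q <= 1 /\ p_small F q /\ (forall p, 0 <= p <= 1 -> p_small F p -> p <= q).

Definition minimal_elt (F : {set {set X}}) (S : {set X}) : bool :=
  (S \in F) && [forall T in F, ((T : {set X}) \subset S) ==> (T == S)].

Definition ell0 (F : {set {set X}}) : nat := \max_(S | minimal_elt F S) #|S|.

Definition ell (F : {set {set X}}) : nat := maxn (ell0 F) 2.

Definition r_AB (A B : {set {set X}}) (p : R) : R :=
  condprob p A (upclosure A) / muF p B.

End Defs.

(* Main.v *)
Require Import Defs.
From HB Require Import structures.
From mathcomp Require Import all_boot all_order all_algebra.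
From mathcomp Require Import reals exp.
From mathcomp Require Import lra ring.
From mathcomp Require boolp classical_sets topology normedtype derive.
Import Order.TTheory GRing.Theory Num.Theory.
Local Open Scope ring_scope.

Section H.
Variables (R : realType) (X : finType).

Lemma muF_poly (F : {set {set X}}) :
  exists P : {poly R}, forall x, muF x F = P.[x].
Proof.
exists (\sum_(S in F) ('X ^+ #|S| * (1 - 'X) ^+ (#|X| - #|S|)%N)) => x.
rewrite horner_sum /muF; apply: eq_bigr => S _.
by rewrite /mu hornerM !hornerE.
Qed.

Lemma mu_gt0 (p : R) S : 0 < p < 1 -> 0 < @mu R X p S.
Proof.
case/andP=> p0 p1; rewrite /mu mulr_gt0 // exprn_gt0 //.
by rewrite subr_gt0.
Qed.

Lemma muF1 (F : {set {set X}}) : [set: X] \in F -> muF (1:R) F = 1.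
Proof.
move=> HT; rewrite /muF (bigD1 [set: X]) //= big1 ?addr0.
  by rewrite /mu cardsT subnn expr1n expr0 mulr1.
move=> S /andP[_ HS]; rewrite /mu subrr expr1n mul1r expr0n.
case: eqP => // /eqP; rewrite subn_eq0 => H.
suff : S == [set: X] by rewrite (negbTE HS).
by rewrite eqEcard subsetT /= cardsT H.
Qed.

Lemma muFT (p : R) : muF p [set: {set X}] = 1.
Proof.
rewrite /muF.
rewrite (partition_big (fun S : {set X} => (inord #|S| : 'I_(#|X|).+1)) predT) //=.
transitivity (\sum_(k < #|X|.+1) ('C(#|X|, k))%:R * (p ^+ k * (1 - p) ^+ (#|X| - k))).
  apply: eq_bigr => k _.
  transitivity (\sum_(S in [set S : {set X} | #|S| == k]) (p ^+ k * (1 - p) ^+ (#|X| - k))).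
    apply: eq_big => S.
      rewrite in_setT inE /=.
      apply/eqP/eqP => [H|H].
        by rewrite -H inordK // ltnS max_card.
      by apply: val_inj; rewrite /= inordK ?H // ltnS max_card.
    move=> /andP[_ /eqP <-]; rewrite inordK // ltnS max_card //.
  by rewrite sumr_const card_draws mulr_natl.
have := exprDn (1 - p) p #|X|; rewrite subrK expr1n => H; rewrite [RHS]H.
by apply: eq_bigr => k _; rewrite mulr_natl mulrC.
Qed.

Lemma muF_gt0 (p : R) (F : {set {set X}}) : 0 < p < 1 -> F != set0 -> 0 < muF p F.
Proof.
move=> hp /set0Pn[S SF]; rewrite /muF (bigD1 S) //=.
rewrite ltr_pwDl ?mu_gt0 // sumr_ge0 // => T _; exact/ltW/mu_gt0.
Qed.
End H.

Module Aux.
Import boolp classical_sets topology normedtype derive numFieldNormedType.Exports.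
Section A.
Variables (R : realType) (X : finType).
Lemma muF_cont (F : {set {set X}}) : continuous (fun x : R => muF x F).
Proof.
have [P HP] := @muF_poly R X F.
have -> : (fun x : R => muF x F) = horner P by apply: funext => x; rewrite HP.
exact: continuous_horner.
Qed.


Lemma ivt_muF (F : {set {set X}}) (p : R) : p <= 1 -> muF p F <= 2^-1 -> muF (1:R) F = 1 ->
  exists2 c, p <= c <= 1 & muF c F = 2^-1.
Proof.
move=> p1 Hle H1.
have [c cin fc] : exists2 c, c \in `[p, 1] & muF c F = 2^-1.
  apply: IVT => //.
    apply: continuous_subspaceT; exact: muF_cont.
  rewrite H1 ge_min Hle le_max /=; apply/orP; right; lra.
by exists c => //; move: cin; rewrite in_itv.
Qed.
End A.
End Aux.

Theorem lemma3p5 (R : realType) (K : R)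
  (HK : forall (Y : finType) (F : {set {set Y}}) (pc qF : R),
          upper_set F -> nontrivial F ->
          is_critical_prob F pc -> is_q F qF ->
          pc <= K * qF * ln (ell F)%:R)
  (X : finType) (A B : {set {set X}}) (p : R) :
  A != set0 -> A \subset B -> 0 < p < 1 ->
  forall qA : R, is_q (upclosure A) qA ->
  K * qA * ln (ell (upclosure A))%:R < p ->
  condprob p A B > 2^-1 * r_AB A B p.
Proof.
move=> A0 AB hp qA HqA Hlt.
have /andP[p0 p1] := hp.
set F := upclosure A.
have AF : A \subset F.
  apply/subsetP => S SA; rewrite inE; apply/existsP; exists S; by rewrite SA subxx.
have upF : upper_set F.
  move=> S T; rewrite !inE => /existsP[U /andP[UA US]] ST.
  apply/existsP; exists U; rewrite UA; exact: subset_trans ST.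
have F0 : F != set0.
  case/set0Pn: A0 => S SA; apply/set0Pn; exists S; exact: (subsetP AF).
have hF : 2^-1 < muF p F.
  case: (boolP (F == [set: {set X}])) => [/eqP ->|FT].
    rewrite muFT; lra.
  rewrite ltNge; apply/negP => Hle.
  have TF : [set: X] \in F.
    case/set0Pn: F0 => S SF; apply: (upF S) => //; exact: subsetT.
  have [c /andP[pc c1] fc] := @Aux.ivt_muF R X F p (ltW p1) Hle (@muF1 R X F TF).
  have := HK _ F c qA upF (conj F0 FT) _ HqA.
  have c0 : 0 <= c by lra.
  move=> /(_ (conj (introT andP (conj c0 c1)) fc)) => H; lra.
have AB' : A :&: B = A by apply/setIidPl.
have AF' : A :&: F = A by apply/setIidPl.
rewrite /r_AB /condprob AB' AF'.
have a0 := @muF_gt0 R X p A hp A0.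
have B0 : B != set0.
  case/set0Pn: A0 => S SA; apply/set0Pn; exists S; exact: (subsetP AB).
have b0 := @muF_gt0 R X p B hp B0.
have f0 : 0 < muF p F by lra.
set a := muF p A in a0 *; set b := muF p B in b0 *; set f := muF p F in hF f0 *.
have -> : 2^-1 * (a / f / b) = (a / b) * (2 * f)^-1.
  by rewrite invfM; field; rewrite ?gt_eqF.
rewrite gtr_pMr ?divr_gt0 // invf_lt1; lra.
Qed.
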